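(* Let $F$ be a field, $\Sigma$ the $\mathfrak{L}_{\rm ring}(F)$-theory of field extensions of $F$, and $n\geq1$. Then every $\exists_n\exists_1$-$\mathfrak{L}_{\rm ring}(F)$-sentence $\varphi$ satisfies ${\rm efd}_\Sigma(\varphi)\leq n$.
   Context: An $\exists_n\exists_1$-formula is one of the form $\exists x_1,\dots,x_m\psi$ with $m\le n$ and $\psi$ a positive boolean combination of formulas of the form $\eta$ or $\exists y\,\eta$ with $\eta$ quantifier-free (such sentences are existential). Essential fiber dimension: for a field $F$, an $\mathfrak{L}_{\rm ring}(F)$-theory $T$ of field extensions of $F$ and an existential $\mathfrak{L}_{\rm ring}(F)$-sentence $\varphi$, ${\rm efd}_T(\varphi)$ is the smallest $d$ such that whenever $\varphi$ holds in some $E\models T$, there exists a subextension $E_0$ of $E/F$ with ${\rm trdeg}(E_0/F)\le d$ such that $\varphi$ holds in every $E'\models T$ into which $E_0$ embeds over $F$. *)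

(* Defs.v *)
From HB Require Import structures.
From mathcomp Require Import all_boot all_order all_algebra.
From mathcomp Require Import mpoly.
Set Implicit Arguments. Unset Strict Implicit. Unset Printing Implicit Defensive.
Import GRing.Theory.
Local Open Scope ring_scope.

(* Variables are de Bruijn-style natural numbers.                      *)
Inductive term (F : Type) : Type :=
| TVar of nat
| TConst of F
| TAdd of term F & term F
| TOpp of term F
| TMul of term F & term F.

Inductive qf_formula (F : Type) : Type :=
| QEq of term F & term F
| QTrue
| QFalse
| QNot of qf_formula F
| QAnd of qf_formula F & qf_formula F
| QOr of qf_formula F & qf_formula F.

(* In [PEx eta] the bound variable y is the
   variable 0 of eta, and variable (i+1) of eta refers to variable i
   of the surrounding context. *)
Inductive pform (F : Type) : Type :=
| PQf of qf_formula F
| PEx of qf_formula F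
| PAnd of pform F & pform F
| POr of pform F & pform F.

(* A formula  exists x_0, ..., x_{m-1}, psi  (the x_i are the variables
   0, ..., m-1 of psi). *)
Record ex_formula (F : Type) : Type := ExForm {
  ex_nvars : nat;
  ex_matrix : pform F }.

Fixpoint term_vars_lt F (k : nat) (t : term F) : bool :=
  match t with
  | TVar i => (i < k)%N
  | TConst _ => true
  | TAdd t1 t2 => term_vars_lt k t1 && term_vars_lt k t2
  | TOpp t1 => term_vars_lt k t1
  | TMul t1 t2 => term_vars_lt k t1 && term_vars_lt k t2
  end.

Fixpoint qf_vars_lt F (k : nat) (f : qf_formula F) : bool :=
  match f with
  | QEq t1 t2 => term_vars_lt k t1 && term_vars_lt k t2
  | QTrue | QFalse => true
  | QNot g => qf_vars_lt k g
  | QAnd g h => qf_vars_lt k g && qf_vars_lt k h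
  | QOr g h => qf_vars_lt k g && qf_vars_lt k h
  end.

Fixpoint pform_vars_lt F (k : nat) (f : pform F) : bool :=
  match f with
  | PQf g => qf_vars_lt k g
  | PEx g => qf_vars_lt k.+1 g
  | PAnd g h => pform_vars_lt k g && pform_vars_lt k h
  | POr g h => pform_vars_lt k g && pform_vars_lt k h
  end.

Definition is_EnE1_sentence F (n : nat) (phi : ex_formula F) : bool :=
  (ex_nvars phi <= n)%N && pform_vars_lt (ex_nvars phi) (ex_matrix phi).

Section Semantics.
Variables (F : fieldType) (E : fieldType) (iota : {rmorphism F -> E}).

Fixpoint eval_term (e : nat -> E) (t : term F) : E :=
  match t with
  | TVar i => e i
  | TConst a => iota a
  | TAdd t1 t2 => eval_term e t1 + eval_term e t2
  | TOpp t1 => - eval_term e t1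
  | TMul t1 t2 => eval_term e t1 * eval_term e t2
  end.

Fixpoint holds_qf (e : nat -> E) (f : qf_formula F) : Prop :=
  match f with
  | QEq t1 t2 => eval_term e t1 = eval_term e t2
  | QTrue => True
  | QFalse => False
  | QNot g => ~ holds_qf e g
  | QAnd g h => holds_qf e g /\ holds_qf e h
  | QOr g h => holds_qf e g \/ holds_qf e h
  end.

Definition cons_env (b : E) (e : nat -> E) : nat -> E :=
  fun i => if i is j.+1 then e j else b.

Fixpoint holds_pform (e : nat -> E) (f : pform F) : Prop :=
  match f with
  | PQf g => holds_qf e g
  | PEx g => exists b : E, holds_qf (cons_env b e) g
  | PAnd g h => holds_pform e g /\ holds_pform e h
  | POr g h => holds_pform e g \/ holds_pform e h
  end.

Definition holds (phi : ex_formula F) : Prop :=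
  exists s : seq E, size s = ex_nvars phi /\
    holds_pform (fun i => nth 0 s i) (ex_matrix phi).

Definition subextension (S : E -> Prop) : Prop :=
  [/\ forall a : F, S (iota a),
      forall x y, S x -> S y -> S (x + y),
      forall x, S x -> S (- x),
      forall x y, S x -> S y -> S (x * y) &
      forall x, S x -> x != 0 -> S (x^-1)].

Definition alg_indep (k : nat) (x : 'I_k -> E) : Prop :=
  forall p : {mpoly F[k]}, mmap iota x p = 0 -> p = 0.

Definition trdeg_le (S : E -> Prop) (d : nat) : Prop :=
  forall (k : nat) (x : 'I_k -> E),
    (forall i, S (x i)) -> alg_indep x -> (k <= d)%N.

Definition embeds_over (S : E -> Prop) (E' : fieldType)
    (iota' : {rmorphism F -> E'}) : Prop :=
  exists g : E -> E',
    [/\ forall x y, S x -> S y -> g (x + y) = g x + g y,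
        forall x y, S x -> S y -> g (x * y) = g x * g y,
        g 1 = 1 &
        forall a : F, g (iota a) = iota' a].

End Semantics.

(* Essential fiber dimension w.r.t. Sigma = theory of field extensions  *)
(* of F (models: fields E with a ring morphism iota : F -> E).         *)
Definition efd_witness (F : fieldType) (phi : ex_formula F) (d : nat) : Prop :=
  forall (E : fieldType) (iota : {rmorphism F -> E}),
    holds iota phi ->
    exists S : E -> Prop,
      [/\ subextension iota S, trdeg_le iota S d &
          forall (E' : fieldType) (iota' : {rmorphism F -> E'}),
            embeds_over iota S iota' -> holds iota' phi].

(* efd_Sigma(phi) <= n : the least d with [efd_witness phi d] exists and
   is at most n. *)
Definition efd_Sigma_le (F : fieldType) (phi : ex_formula F) (n : nat) : Prop :=
  exists d : nat, (d <= n)%N /\ efd_witness phi d.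

(* Main.v *)
Require Import Defs.
From mathcomp Require Import all_boot all_order all_algebra.
From HB Require Import structures.
From mathcomp Require Import mpoly.
From mathcomp Require Import zify ring.
From Stdlib Require Import Classical FunctionalExtensionality.
Set Implicit Arguments. Unset Strict Implicit. Unset Printing Implicit Defensive.
Import GRing.Theory.
Local Open Scope ring_scope.


Section LinDep.
Variables (F E : fieldType) (iota : {rmorphism F -> E}).

Lemma comb_fin (J : finType) (v : J -> E) (l : seq (J * F)) :
  exists c : J -> F, \sum_(p <- l) iota p.2 * v p.1 = \sum_j iota (c j) * v j.
Proof.
elim: l => [|[j0 x] l [c IH]].
  exists (fun _ => 0); rewrite big_nil big1 // => j _; by rewrite rmorph0 mul0r.
exists (fun j => c j + (if j == j0 then x else 0)).
rewrite big_cons IH /=.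
rewrite [RHS](eq_bigr (fun j => iota (c j) * v j + iota (if j == j0 then x else 0) * v j)); last first.
  by move=> j _ /=; rewrite rmorphD mulrDl.
rewrite big_split /= addrC; congr (_ + _).
rewrite (bigD1 j0) //= eqxx big1 ?addr0 // => j /negbTE ->.
by rewrite rmorph0 mul0r.
Qed.

Lemma lin_dep (I J : finType) (u : I -> E) (v : J -> E) :
  (#|J| < #|I|)%N ->
  (forall i, exists l : seq (J * F), u i = \sum_(p <- l) iota p.2 * v p.1) ->
  exists a : I -> F, (exists i, a i != 0) /\ \sum_i iota (a i) * u i = 0.
Proof.
move=> ltJI Hu.
have [C HC] : exists C : I -> J -> F, forall i, u i = \sum_j iota (C i j) * v j.
  apply: (@fin_all_exists I (fun _ => J -> F) (fun i C => u i = \sum_j iota (C j) * v j)) => i; have [l ->] := Hu i; exact: comb_fin.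
pose M : 'M[F]_(#|I|, #|J|) := \matrix_(i, j) C (enum_val i) (enum_val j).
have [r Hr] : exists r, row r (kermx M) != 0.
  apply/existsP; apply: contraT; rewrite negb_exists => /forallP H.
  have K0 : kermx M = 0.
    apply/row_matrixP => r; rewrite row0; move: (H r); by rewrite negbK => /eqP.
  have := mxrank_ker M; rewrite K0 mxrank0 => /esym /eqP; rewrite subn_eq0 => Hle.
  have := leq_trans Hle (rank_leq_col M); by rewrite leqNgt ltJI.
pose a' := row r (kermx M).
have Ha' : a' *m M = 0 by rewrite /a' -row_mul mulmx_ker row0.
exists (fun i => a' 0 (enum_rank i)); split.
  have [i Hi] : exists i, a' 0 i != 0.
    apply/existsP; apply: contraT; rewrite negb_exists => /forallP H.
    suff: a' = 0 by move/eqP; rewrite /a' (negbTE Hr).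
    apply/rowP => i.
    by move: (H i); rewrite negbK !mxE => /eqP.
  by exists (enum_val i); rewrite enum_valK.
rewrite (eq_bigr (fun i => \sum_j iota (a' 0 (enum_rank i) * C i j) * v j)); last first.
  by move=> i _; rewrite HC mulr_sumr; apply: eq_bigr => j _; rewrite rmorphM mulrA.
rewrite exchange_big /= big1 // => j _.
rewrite -mulr_suml -rmorph_sum.
have -> : \sum_i a' 0 (enum_rank i) * C i j = (a' *m M) 0 (enum_rank j).
  rewrite mxE (reindex (@enum_val I [pred _ | true])) /=; last first.
    by apply: onW_bij; apply: enum_val_bij.
  apply: eq_bigr => i _; by rewrite enum_valK [M _ _]mxE enum_rankK.
by rewrite Ha' mxE rmorph0 mul0r.
Qed.
End LinDep.
Section Comb.
Variables (F E : fieldType) (io : {rmorphism F -> E}) (gen : nat -> E).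

Definition mono (u : seq nat) : E := \prod_(k <- u) gen k.

Definition Comb (ok : pred (seq nat)) (z : E) :=
  exists l : seq (seq nat * F), all (fun p => ok p.1) l /\
    z = \sum_(p <- l) io p.2 * mono p.1.

Lemma mono_cat u v : mono (u ++ v) = mono u * mono v.
Proof. by rewrite /mono big_cat. Qed.

Lemma mono_cons k u : mono (k :: u) = gen k * mono u.
Proof. by rewrite /mono big_cons. Qed.

Lemma Comb_sub (ok ok' : pred (seq nat)) z :
  (forall u, ok u -> ok' u) -> Comb ok z -> Comb ok' z.
Proof.
move=> H [l [Hl ->]]; exists l; split => //.
by apply/allP => p /(allP Hl) /H.
Qed.

Lemma Comb0 (ok : pred (seq nat)) : Comb ok 0.
Proof. by exists [::]; rewrite big_nil. Qed.

Lemma CombD (ok : pred (seq nat)) z y : Comb ok z -> Comb ok y -> Comb ok (z + y).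
Proof.
move=> [l1 [H1 ->]] [l2 [H2 ->]]; exists (l1 ++ l2).
by rewrite all_cat H1 H2 big_cat.
Qed.

Lemma CombZ (ok : pred (seq nat)) a z : Comb ok z -> Comb ok (io a * z).
Proof.
move=> [l [H ->]]; exists [seq (p.1, a * p.2) | p <- l]; split.
  by rewrite all_map; apply/allP => p /(allP H).
rewrite big_map mulr_sumr; apply: eq_bigr => p _ /=.
by rewrite rmorphM mulrA.
Qed.

Lemma CombN (ok : pred (seq nat)) z : Comb ok z -> Comb ok (- z).
Proof. by move=> /(CombZ (-1)); rewrite rmorphN1 mulN1r. Qed.

Lemma Comb_word (ok : pred (seq nat)) a u : ok u -> Comb ok (io a * mono u).
Proof. by move=> H; exists [:: (u, a)]; rewrite /= H big_seq1. Qed.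


Lemma Comb_sum (ok : pred (seq nat)) (s : seq (seq nat * F)) (f : (seq nat * F) -> E) :
  (forall i, i \in s -> Comb ok (f i)) -> Comb ok (\sum_(i <- s) f i).
Proof.
elim: s => [|x s IH] H; first by rewrite big_nil; apply: Comb0.
rewrite big_cons; apply: CombD; first by apply: H; rewrite inE eqxx.
by apply: IH => i Hi; apply: H; rewrite inE Hi orbT.
Qed.

Lemma Comb_mulr (ok ok' : pred (seq nat)) z y :
  (forall u, ok u -> Comb ok' (mono u * y)) -> Comb ok z -> Comb ok' (z * y).
Proof.
move=> H [l [Hl ->]]; rewrite mulr_suml; apply: Comb_sum => p Hp.
by rewrite -mulrA; apply: CombZ; apply: H; apply: (allP Hl).
Qed.

Lemma Comb_mull (ok ok' : pred (seq nat)) z y :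
  (forall v, ok v -> Comb ok' (z * mono v)) -> Comb ok y -> Comb ok' (z * y).
Proof.
move=> H [l [Hl ->]]; rewrite mulr_sumr; apply: Comb_sum => p Hp.
by rewrite mulrCA; apply: CombZ; apply: H; apply: (allP Hl).
Qed.

Lemma Comb_mul (ok1 ok2 ok3 : pred (seq nat)) z y :
  (forall u v, ok1 u -> ok2 v -> ok3 (u ++ v)) ->
  Comb ok1 z -> Comb ok2 y -> Comb ok3 (z * y).
Proof.
move=> H Hz Hy; apply: Comb_mulr Hz => u Hu.
apply: Comb_mull Hy => v Hv; rewrite -mono_cat -[mono _]mul1r -(rmorph1 io).
by apply: Comb_word; apply: H.
Qed.

End Comb.

Lemma expn_le_base m n e : (m <= n)%N -> (m ^ e <= n ^ e)%N.
Proof.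
move=> H; elim: e => [|e IH]; first by [].
by rewrite !expnS leq_mul.
Qed.

Lemma card_ineq (k nf r dd c : nat) : (nf < k)%N ->
  (((k * ((k * c + 1) ^ nf * dd.+1 ^ r) * c).+1) ^ nf * dd.+1 ^ r <
   ((k * c + 1) ^ nf * dd.+1 ^ r).+1 ^ k)%N.
Proof.
move=> Hk; set D := ((k * c + 1) ^ nf * dd.+1 ^ r)%N.
have h1 : ((k * D * c).+1 <= (k * c + 1) * D.+1)%N by nia.
apply: (@leq_trans (((k * c + 1) * D.+1) ^ nf * dd.+1 ^ r).+1).
  apply: (leq_ltn_trans _ (ltnSn _)); apply: leq_mul => //; exact: expn_le_base.
rewrite expnMn mulnAC -/D.
apply: (@leq_trans (D.+1 ^ nf.+1)).
  by rewrite expnS ltn_mul2r ltnSn expn_gt0.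
by apply: leq_pexp2l.
Qed.


Section FW.
Variables (F E : fieldType) (io : {rmorphism F -> E}) (gen : nat -> E).
Variables (nf r dd e0 : nat).
Local Notation N := (nf + r)%N.
Local Notation mono := (mono gen).
Local Notation Comb := (Comb io gen).

Definition okw (B : nat) : pred (seq nat) := fun u =>
  all (fun k => k < N)%N u &&
  all (fun k => if (k < nf)%N then (count_mem k u <= B)%N else (count_mem k u <= dd)%N)
      (iota 0 N).

Hypothesis Hint : forall k, (nf <= k < N)%N ->
  exists l : seq (seq nat * F), gen k ^+ dd.+1 = \sum_(p <- l) io p.2 * mono p.1 /\
    all (fun p => all (fun i => (i < nf)%N || (i == k)) p.1 &&
                  all (fun i => count_mem i p.1 <= e0)%N (iota 0 nf) &&
                  (count_mem k p.1 <= dd)%N) l.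

Lemma okwP B u : okw B u <->
  (forall k, k \in u -> (k < N)%N) /\
  (forall k, (k < N)%N -> if (k < nf)%N then (count_mem k u <= B)%N else (count_mem k u <= dd)%N).
Proof.
rewrite /okw; split.
  case/andP => /allP H1 /allP H2; split => // k Hk; apply: H2; by rewrite mem_iota.
case=> H1 H2; apply/andP; split; apply/allP => // k; rewrite mem_iota => /andP [_ Hk].
exact: H2.
Qed.

Lemma okw_mono B B' u : (B <= B')%N -> okw B u -> okw B' u.
Proof.
move=> HB /okwP [H1 H2]; apply/okwP; split => // k Hk; move: (H2 k Hk).
by case: ifP => // _ /leq_trans; apply.
Qed.

Lemma Comb_okw_mono B B' z : (B <= B')%N -> Comb (okw B) z -> Comb (okw B') z.
Proof. by move=> HB; apply: Comb_sub => u; apply: okw_mono. Qed.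

Lemma mono_split (k : nat) (u : seq nat) :
  mono u = mono (filter (predC1 k) u) * gen k ^+ count_mem k u.
Proof.
elim: u => [|a u IH] /=; first by rewrite /mono !big_nil expr0 mulr1.
rewrite mono_cons IH; case: eqP => [->|Hne] /=.
  by rewrite add1n exprS mulrCA.
by rewrite mono_cons add0n mulrA.
Qed.

Lemma count_filterC1 (k i : nat) (u : seq nat) :
  count_mem i (filter (predC1 k) u) = if i == k then 0%N else count_mem i u.
Proof.
elim: u => [|a u IH] /=; first by case: ifP.
have [Eak|Hne] := eqVneq a k; rewrite /=.
  subst a; rewrite IH; have [Eik|Hik] := eqVneq i k; first by [].
  by rewrite add0n.
rewrite IH; have [Eik|Hik] := eqVneq i k; last by [].
by subst i; rewrite /= (negbTE Hne).
Qed.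

Lemma red B u k : okw B u -> (k < N)%N -> Comb (okw (B + e0.+1)) (mono u * gen k).
Proof.
move=> /okwP [H1 H2] HkN.
have Hcons : okw (B + e0.+1) (k :: u) ->
    Comb (okw (B + e0.+1)) (mono u * gen k).
  move=> Hok; rewrite mulrC -mono_cons -[mono _]mul1r -(rmorph1 io).
  exact: Comb_word.
case: (ltnP k nf) => Hknf.
  apply: Hcons; apply/okwP; split.
    by move=> i; rewrite inE => /orP [/eqP ->|/H1].
  move=> i HiN; move: (H2 i HiN) => /=; case: ifP => Hinf.
    move=> Hc; case: (k == i); lia.
  have -> : (k == i) = false by apply/eqP => Eki; rewrite Eki Hinf in Hknf.
  by [].
have Hk := H2 k HkN; rewrite ltnNge Hknf /= in Hk.
move: Hk; rewrite leq_eqVlt => /orP [/eqP Hcnt | Hlt].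
  have [l [Hl Hlok]] := Hint (k := k) (ltac:(by rewrite Hknf HkN)).
  rewrite (mono_split k u) Hcnt -mulrA -exprSr Hl mulr_sumr.
  apply: Comb_sum => p Hp; rewrite mulrCA; apply: CombZ.
  rewrite -mono_cat -[mono _]mul1r -(rmorph1 io); apply: Comb_word.
  move: (allP Hlok p Hp) => /andP [/andP [/allP Hv1 /allP Hv2] Hv3].
  apply/okwP; split.
    move=> i; rewrite mem_cat mem_filter => /orP [/andP [_ /H1] //|/Hv1 /orP [Hi|/eqP ->]].
      by apply: leq_trans Hi (leq_addr _ _).
    by [].
  move=> i HiN; rewrite count_cat count_filterC1.
  case: ifP => Hinf.
    have -> : (i == k) = false by apply/eqP => Eik; rewrite Eik ltnNge Hknf in Hinf.
    have := H2 i HiN; rewrite Hinf => Hc.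
    have := Hv2 i; rewrite mem_iota add0n Hinf => /(_ isT) Hc2; lia.
  case: (eqVneq i k) => [->|Hik]; first by rewrite add0n.
  have -> : count_mem i p.1 = 0%N.
    apply/count_memPn/negP => Hin; move: (Hv1 i Hin) => /orP [Hi|/eqP Ei].
      by rewrite Hi in Hinf.
    by rewrite Ei eqxx in Hik.
  by rewrite addn0; have := H2 i HiN; rewrite Hinf.
apply: Hcons; apply/okwP; split.
  by move=> i; rewrite inE => /orP [/eqP ->|/H1].
move=> i HiN; move: (H2 i HiN) => /=; case: ifP => Hinf.
  have -> : (k == i) = false by apply/eqP => Eki; rewrite -Eki ltnNge Hknf in Hinf.
  move=> Hc; lia.
case: (eqVneq k i) => [<-|Hki] /=; first by move=> _; lia.
by [].
Qed.


Lemma size_count (u : seq nat) : all (fun k => k < N)%N u ->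
  size u = (\sum_(k < N) count_mem (k : nat) u)%N.
Proof.
elim: u => [|a u IH] /=.
  by rewrite big1.
case/andP => Ha /IH ->; rewrite big_split /=.
have -> : (\sum_(k < N) (a == k) = 1)%N.
  rewrite (bigD1 (Ordinal Ha)) //= eqxx big1 ?addn0 //.
  move=> j Hj; apply/eqP; rewrite eqb0; apply: contra Hj => /eqP Ej.
  by apply/eqP/val_inj.
by rewrite add1n.
Qed.

Lemma okw_size B u : okw B u -> (size u <= N * (B + dd))%N.
Proof.
move=> Hok; move: (Hok) => /okwP [H1 H2].
have Hall : all (fun k => k < N)%N u by apply/allP.
rewrite size_count //.
apply: (@leq_trans (\sum_(k < N) (B + dd))%N).
  apply: leq_sum => k _; move: (H2 k (ltn_ord k)); case: ifP => _ H; lia.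
by rewrite big_const_ord iter_addn_0 mulnC.
Qed.

Lemma Comb_one a : Comb (okw 0) (io a).
Proof.
rewrite -[io a]mulr1; have -> : (1 : E) = mono [::] by rewrite /mono big_nil.
apply: Comb_word; apply/okwP; split => // k _; by case: ifP.
Qed.

Lemma mulword B z v : Comb (okw B) z -> all (fun k => k < N)%N v ->
  Comb (okw (B + size v * e0.+1)) (z * mono v).
Proof.
elim: v B z => [|k v IH] B z Hz /=.
  by rewrite addn0 /mono big_nil mulr1.
case/andP => Hk Hv; rewrite mono_cons mulrA.
have Hz' : Comb (okw (B + e0.+1)) (z * gen k).
  by apply: Comb_mulr Hz => u Hu; apply: red.
have := IH _ _ Hz' Hv.
by rewrite mulSn addnA.
Qed.

Lemma mulA B B' z y : Comb (okw B) z -> Comb (okw B') y ->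
  Comb (okw (B + N * (B' + dd) * e0.+1)) (z * y).
Proof.
move=> Hz; apply: Comb_mull => v Hv.
apply: Comb_okw_mono (mulword Hz _); last by case/andP: Hv.
by rewrite leq_add2l leq_mul2r okw_size ?orbT.
Qed.

Lemma gen_comb k : (k < N)%N -> Comb (okw e0.+1) (gen k).
Proof.
move=> Hk; rewrite -[gen k]mul1r; have -> : (1 : E) = mono [::] by rewrite /mono big_nil.
rewrite -[e0.+1]add0n; apply: red => //.
apply/okwP; split => // i _; by case: ifP.
Qed.


Definition Aset z := exists B, Comb (okw B) z.
Definition Sset z := exists a b, Aset a /\ Aset b /\ b != 0 /\ z = a / b.

Lemma A_add z y : Aset z -> Aset y -> Aset (z + y).
Proof.
move=> [B Hz] [B' Hy]; exists (B + B')%N; apply: CombD.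
  by apply: Comb_okw_mono Hz; apply: leq_addr.
by apply: Comb_okw_mono Hy; apply: leq_addl.
Qed.

Lemma A_mul z y : Aset z -> Aset y -> Aset (z * y).
Proof. by move=> [B Hz] [B' Hy]; eexists; apply: mulA Hz Hy. Qed.

Lemma A_opp z : Aset z -> Aset (- z).
Proof. by move=> [B Hz]; exists B; apply: CombN. Qed.

Lemma A_io a : Aset (io a).
Proof. by exists 0%N; apply: Comb_one. Qed.

Lemma A_gen k : (k < N)%N -> Aset (gen k).
Proof. by move=> Hk; exists e0.+1; apply: gen_comb. Qed.

Lemma A_S z : Aset z -> Sset z.
Proof.
move=> Hz; exists z, 1; split => //; split; first by rewrite -(rmorph1 io); apply: A_io.
by rewrite oner_neq0 divr1.
Qed.

Lemma S_subext : subextension io Sset.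
Proof.
split.
- by move=> a; apply: A_S; apply: A_io.
- move=> x y [a [b [Ha [Hb [Hb0 ->]]]]] [c [d [Hc [Hd [Hd0 ->]]]]].
  exists (a * d + c * b), (b * d); split; first by apply: A_add; apply: A_mul.
  split; first by apply: A_mul.
  split; first by rewrite mulf_neq0.
  by field; apply/andP.
- move=> x [a [b [Ha [Hb [Hb0 ->]]]]]; exists (- a), b; split; first by apply: A_opp.
  by split => //; split => //; rewrite mulNr.
- move=> x y [a [b [Ha [Hb [Hb0 ->]]]]] [c [d [Hc [Hd [Hd0 ->]]]]].
  exists (a * c), (b * d); split; first by apply: A_mul.
  split; first by apply: A_mul.
  split; first by rewrite mulf_neq0.
  by field; apply/andP.
- move=> x [a [b [Ha [Hb [Hb0 ->]]]]] Hx0; exists b, a; split => //; split => //.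
  have Ha0 : a != 0 by apply: contraNneq Hx0 => ->; rewrite mul0r.
  by split => //; rewrite invf_div.
Qed.

Lemma common_den (zs : seq E) : (forall z, z \in zs -> Sset z) ->
  exists B0 b, Comb (okw B0) b /\ b != 0 /\ forall z, z \in zs -> Comb (okw B0) (b * z).
Proof.
elim: zs => [|w zs IH] Hzs.
  exists 0%N, 1; split; first by rewrite -(rmorph1 io); apply: Comb_one.
  by split; [exact: oner_neq0|].
have [B0 [b [Hb [Hb0 Hbz]]]] := IH (fun z Hz => Hzs z (ltac:(by rewrite inE Hz orbT))).

have [a [c [[Ba Ha] [[Bc Hc] [Hc0 Ew]]]]] := Hzs w (mem_head _ _).
pose B1 := (B0 + N * (Ba + Bc + B0 + dd) * e0.+1)%N.
have Hm : forall B x y, (B <= Ba + Bc + B0)%N -> Comb (okw B0) x -> Comb (okw B) y ->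
    Comb (okw B1) (x * y).
  move=> B x y HB Hx Hy; apply: Comb_okw_mono (mulA Hx Hy).
  by rewrite leq_add2l leq_mul2r leq_mul2l leq_add2r HB !orbT.
exists B1, (b * c); split; first by apply: Hm Hb Hc; lia.
split; first by rewrite mulf_neq0.
move=> z; rewrite inE => /orP [/eqP ->|Hz].
  rewrite Ew; have -> : b * c * (a / c) = b * a by field.
  by apply: Hm Hb Ha; lia.
rewrite mulrAC; apply: Hm (Hbz z Hz) Hc; lia.
Qed.


Lemma powc B0 j y x i :
  Comb (okw (j * (B0 + N * (B0 + dd) * e0.+1))) y -> Comb (okw B0) x ->
  Comb (okw ((j + i) * (B0 + N * (B0 + dd) * e0.+1))) (y * x ^+ i).
Proof.
move=> Hy Hx; elim: i => [|i IH]; first by rewrite addn0 expr0 mulr1.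
rewrite exprSr mulrA; apply: Comb_okw_mono (mulA IH Hx).
rewrite addnS mulSn addnC leq_add2r; lia.
Qed.

Lemma mono_count (u : seq nat) : all (fun k => k < N)%N u ->
  mono u = \prod_(i < N) gen i ^+ count_mem (i : nat) u.
Proof.
elim: u => [|a u IH] /=.
  by rewrite /mono big_nil big1 // => i _; rewrite expr0.
case/andP => Ha /IH IHu; rewrite mono_cons IHu.
rewrite [RHS](eq_bigr (fun i : 'I_N => gen i ^+ (a == i) * gen i ^+ count_mem (i : nat) u)); last first.
  by move=> i _ /=; rewrite exprD.
rewrite big_split /=; congr (_ * _).
rewrite (bigD1 (Ordinal Ha)) //= eqxx expr1 big1 ?mulr1 //.
move=> j Hj; have -> : (a == j) = false.
  apply/negbTE; apply: contra Hj => /eqP Ej; by apply/eqP/val_inj.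
by rewrite expr0.
Qed.

Definition vmon B (jj : {ffun 'I_nf -> 'I_B.+1} * {ffun 'I_r -> 'I_dd.+1}) : E :=
  (\prod_(i < nf) gen i ^+ jj.1 i) * (\prod_(j < r) gen (nf + j) ^+ jj.2 j).

Definition idx B (u : seq nat) : {ffun 'I_nf -> 'I_B.+1} * {ffun 'I_r -> 'I_dd.+1} :=
  ([ffun i : 'I_nf => inord (count_mem (i : nat) u)],
   [ffun j : 'I_r => inord (count_mem (nf + j)%N u)]).

Lemma mono_vmon B u : okw B u -> mono u = vmon (idx B u).
Proof.
move=> Hok; move: (Hok) => /okwP [H1 H2].
rewrite mono_count; last by apply/allP.
rewrite big_split_ord /vmon /=; congr (_ * _); apply: eq_bigr => i _; rewrite ffunE inordK //.
  by have := H2 i (ltn_addr _ (ltn_ord i)); rewrite ltn_ord.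
have := H2 (nf + i)%N; rewrite ltn_add2l ltn_ord => /(_ isT).
by rewrite ltnNge leq_addr.
Qed.

Lemma Comb_span B z : Comb (okw B) z ->
  exists l : seq (({ffun 'I_nf -> 'I_B.+1} * {ffun 'I_r -> 'I_dd.+1}) * F),
    z = \sum_(p <- l) io p.2 * vmon p.1.
Proof.
move=> [l [Hl ->]]; exists [seq (idx B p.1, p.2) | p <- l].
rewrite big_map; apply: eq_big_seq => p Hp /=.
by rewrite (mono_vmon (allP Hl p Hp)).
Qed.

Lemma trdeg_fw n : (nf <= n)%N -> trdeg_le io Sset n.
Proof.
move=> Hnf k z Hz Hind; case: leqP => // Hnk; exfalso.
have [B0 [b [Hb [Hb0 Hbz]]]] := @common_den [seq z i | i <- index_enum 'I_k]
  (fun w Hw => ltac:(case/mapP: Hw => i _ ->; exact: Hz)).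
have Hbz' : forall i, Comb (okw B0) (b * z i).
  by move=> i; apply: Hbz; apply: map_f; rewrite mem_index_enum.
set c' := (B0 + N * (B0 + dd) * e0.+1)%N.
set D := ((k * c' + 1) ^ nf * dd.+1 ^ r)%N.
set K := (k * D)%N.
set BK := (K * c')%N.
pose u (al : {ffun 'I_k -> 'I_D.+1}) := b ^+ K * \prod_(i < k) z i ^+ al i.
have Hu : forall al, Comb (okw BK) (u al).
  move=> al.
  have Hs : forall s : seq 'I_k,
      Comb (okw ((\sum_(i <- s) (al i : nat)) * c')) (\prod_(i <- s) (b * z i) ^+ al i).
    elim => [|i s IH].
      by rewrite !big_nil mul0n -(rmorph1 io); apply: Comb_one.
    rewrite !big_cons mulrC addnC; exact: powc.
  have Hsum : (\sum_(i < k) (al i : nat) <= K)%N.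
    apply: (@leq_trans (\sum_(i < k) D)%N).
      by apply: leq_sum => i _; rewrite -ltnS ltn_ord.
    by rewrite big_const_ord iter_addn_0 mulnC.
  have := powc (K - \sum_(i < k) (al i : nat)) (Hs (index_enum 'I_k)) Hb.
  rewrite subnKC //; congr Comb.
  rewrite /u (eq_bigr (fun i => b ^+ al i * z i ^+ al i)); last by move=> i _; rewrite exprMn.
  rewrite big_split /= prodrXr -[in RHS](subnKC Hsum) exprD.
  by rewrite mulrAC.
have Hspan := fun al => Comb_span (Hu al).
have := @lin_dep _ _ io _ _ u (@vmon BK).
rewrite card_prod !card_ffun !card_ord => /(_ (card_ineq r dd c' (leq_ltn_trans Hnf Hnk)) Hspan) [a [[al0 Ha0] Hsum]].
pose mnm (al : {ffun 'I_k -> 'I_D.+1}) : 'X_{1..k} := [multinom (al i : nat) | i < k].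
have mnmE : forall al i, mnm al i = al i.
  by move=> al i; rewrite /mnm multinomE tnth_mktuple.
have mnm_inj : forall al al', (mnm al == mnm al') = (al == al').
  move=> al al'; apply/eqP/eqP => [Ea|->] //.
  apply/ffunP => i; apply/val_inj; by rewrite /= -!mnmE Ea.
pose p : {mpoly F[k]} := \sum_al a al *: 'X_[mnm al].
have Hmm : mmap io z p = 0.
  have : b ^+ K * mmap io z p = 0.
    rewrite -Hsum /p raddf_sum mulr_sumr; apply: eq_bigr => al _.
    rewrite /= mmapZ mmapX /mmap1 /u mulrCA; congr (_ * (_ * _)).
    by apply: eq_bigr => i _; rewrite mnmE.
  by move/eqP; rewrite mulf_eq0 expf_eq0 (negbTE Hb0) andbF /= => /eqP.
have := Hind p Hmm => /(congr1 (mcoeff (mnm al0))).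
rewrite mcoeff0 /p raddf_sum (bigD1 al0) //= mcoeffZ mcoeffX eqxx mulr1 big1 ?addr0.
  by move/eqP; rewrite (negbTE Ha0).
move=> al Hal; rewrite mcoeffZ mcoeffX mnm_inj (negbTE Hal) mulr0 //.
Qed.

End FW.

Section RSec.
Variables (F E : fieldType) (io : {rmorphism F -> E}) (s : seq E).
Local Notation e := (fun i : nat => nth 0 s i).

Definition Rr (z : E) := exists t : term F, z = eval_term io e t.

Lemma R_io a : Rr (io a). Proof. by exists (TConst a). Qed.
Lemma R0 : Rr 0. Proof. by rewrite -(rmorph0 io); apply: R_io. Qed.
Lemma R1 : Rr 1. Proof. by rewrite -(rmorph1 io); apply: R_io. Qed.
Lemma R_e i : Rr (e i). Proof. by exists (TVar F i). Qed.
Lemma RD x y : Rr x -> Rr y -> Rr (x + y).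
Proof. by move=> [t ->] [t' ->]; exists (TAdd t t'). Qed.
Lemma RN x : Rr x -> Rr (- x).
Proof. by move=> [t ->]; exists (TOpp t). Qed.
Lemma RM x y : Rr x -> Rr y -> Rr (x * y).
Proof. by move=> [t ->] [t' ->]; exists (TMul t t'). Qed.
Lemma RX x k : Rr x -> Rr (x ^+ k).
Proof. move=> Hx; elim: k => [|k IH]; [exact: R1 | by rewrite exprS; apply: RM]. Qed.
Lemma R_sum (I : Type) (r : seq I) (P : pred I) (f : I -> E) :
  (forall i, Rr (f i)) -> Rr (\sum_(i <- r | P i) f i).
Proof. move=> H; apply: big_ind => //; [exact: R0 | exact: RD]. Qed.

Fixpoint pot (t : term F) : {poly E} :=
  match t with
  | TVar 0 => 'X
  | TVar i.+1 => (e i)%:P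
  | TConst a => (io a)%:P
  | TAdd t1 t2 => pot t1 + pot t2
  | TOpp t1 => - pot t1
  | TMul t1 t2 => pot t1 * pot t2
  end.

Lemma pot_eval b t : (pot t).[b] = eval_term io (cons_env b e) t.
Proof.
elim: t => [[|i]|a|t1 IH1 t2 IH2|t1 IH1|t1 IH1 t2 IH2] /=.
- by rewrite hornerX.
- by rewrite hornerC.
- by rewrite hornerC.
- by rewrite hornerD IH1 IH2.
- by rewrite hornerN IH1.
- by rewrite hornerM IH1 IH2.
Qed.

Definition Rpoly (P : {poly E}) := forall i, Rr P`_i.

Lemma pot_coef t : Rpoly (pot t).
Proof.
elim: t => [[|i]|a|t1 IH1 t2 IH2|t1 IH1|t1 IH1 t2 IH2] j /=.
- rewrite coefX; case: (_ == _); [exact: R1 | exact: R0].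
- rewrite coefC; case: (_ == _); [exact: R_e | exact: R0].
- rewrite coefC; case: (_ == _); [exact: R_io | exact: R0].
- by rewrite coefD; apply: RD.
- by rewrite coefN; apply: RN.
- by rewrite coefM; apply: R_sum => k; apply: RM.
Qed.

Fixpoint atom_polys (f : qf_formula F) : seq {poly E} :=
  match f with
  | QEq t1 t2 => [:: pot t1 - pot t2]
  | QTrue | QFalse => [::]
  | QNot g => atom_polys g
  | QAnd g h => atom_polys g ++ atom_polys h
  | QOr g h => atom_polys g ++ atom_polys h
  end.

Lemma atom_Rpoly f P : P \in atom_polys f -> Rpoly P.
Proof.
elim: f => [t1 t2|||g IH|g IHg h IHh|g IHg h IHh] //=.
- rewrite inE => /eqP -> i; rewrite coefB; apply: RD; [exact: pot_coef | apply: RN; exact: pot_coef].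
- by rewrite mem_cat => /orP [/IHg|/IHh].
- by rewrite mem_cat => /orP [/IHg|/IHh].
Qed.

Lemma qf_swap f b u :
  (forall P, P \in atom_polys f -> (P.[b] == 0) = (P.[u] == 0)) ->
  holds_qf io (cons_env b e) f <-> holds_qf io (cons_env u e) f.
Proof.
elim: f => [t1 t2|||g IH|g IHg h IHh|g IHg h IHh] /= H.
- have := H (pot t1 - pot t2); rewrite inE eqxx => /(_ isT).
  rewrite !hornerD !hornerN !subr_eq0 !pot_eval => Heq.
  by split => /eqP; [rewrite Heq | rewrite -Heq] => /eqP.
- by [].
- by [].
- by rewrite IH.
- rewrite IHg ?IHh // => P HP; apply: H; by rewrite mem_cat HP ?orbT.
- rewrite IHg ?IHh // => P HP; apply: H; by rewrite mem_cat HP ?orbT.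
Qed.

Definition trans (y : E) := forall P, Rpoly P -> P.[y] = 0 -> P = 0.

Lemma trans_swap f b u : trans b -> trans u ->
  holds_qf io (cons_env b e) f -> holds_qf io (cons_env u e) f.
Proof.
move=> Hb Hu.
suff Hs : forall P, P \in atom_polys f -> (P.[b] == 0) = (P.[u] == 0) by case: (qf_swap Hs).
move=> P HP.
have HR := atom_Rpoly HP.
have [->|HP0] := eqVneq P 0; first by rewrite !horner0 eqxx.
have -> : (P.[b] == 0) = false by apply/eqP => /(Hb _ HR) /eqP; rewrite (negbTE HP0).
have -> : (P.[u] == 0) = false by apply/eqP => /(Hu _ HR) /eqP; rewrite (negbTE HP0).
by [].
Qed.

Definition Rinf := forall sq : seq E, exists x, Rr x /\ x \notin sq.

Lemma Rinf_seq : Rinf -> forall N, exists sq : seq E, [/\ uniq sq, size sq = N & forall x, x \in sq -> Rr x].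
Proof.
move=> HR; elim => [|N [sq [Hu Hs Hr]]]; first by exists [::].
have [x [Hx Hn]] := HR sq; exists (x :: sq); split => /=; [by rewrite Hn | by rewrite Hs|].
by move=> y; rewrite inE => /orP [/eqP ->|/Hr].
Qed.

Lemma Rinf_avoid (Q : {poly E}) : Rinf -> Q != 0 -> exists u, Rr u /\ Q.[u] != 0.
Proof.
move=> HR HQ; apply: NNPP => Hn.
have [sq [Hu Hs Hr]] := Rinf_seq HR (size Q).
suff Hall : all (root Q) sq by move: (max_poly_roots HQ Hall Hu); rewrite Hs ltnn.
apply/allP => x /Hr Hx; apply/negPn/negP => Hx0; apply: Hn; by exists x.
Qed.

Lemma trans_replace f b : Rinf -> trans b -> holds_qf io (cons_env b e) f ->
  exists u, Rr u /\ holds_qf io (cons_env u e) f.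
Proof.
move=> HR Hb Hf.
pose Ps := [seq P <- atom_polys f | P != 0].
have HQ : \prod_(P <- Ps) P != 0.
  by rewrite prodf_seq_neq0; apply/allP => P; rewrite mem_filter => /andP [->].
have [u [Hu HQu]] := Rinf_avoid HR HQ.
exists u; split => //.
suff Hs : forall P, P \in atom_polys f -> (P.[b] == 0) = (P.[u] == 0) by case: (qf_swap Hs) => H _; apply: H.
move=> P HP.
have HRP := atom_Rpoly HP.
have [->|HP0] := eqVneq P 0; first by rewrite !horner0 eqxx.
have -> : (P.[b] == 0) = false by apply/eqP => /(Hb _ HRP) /eqP; rewrite (negbTE HP0).
move: HQu; rewrite horner_prod prodf_seq_neq0 => /allP /(_ P).
by rewrite mem_filter HP0 HP => /(_ isT) /= /negbTE ->.
Qed.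


Lemma pigeon (h : nat -> E) (sq : seq E) : (forall i, h i \in sq) ->
  exists a b, (a < b)%N /\ h a = h b.
Proof.
move=> Hh; apply: NNPP => Hn.
have Hinj : {in iota 0 (size sq).+1 &, injective h}.
  move=> a b _ _ Hab; case: (ltngtP a b) => // H; exfalso; apply: Hn.
    by exists a, b.
  by exists b, a.
have Hu : uniq [seq h i | i <- iota 0 (size sq).+1] by rewrite map_inj_in_uniq // iota_uniq.
have Hsub : {subset [seq h i | i <- iota 0 (size sq).+1] <= sq} by move=> x /mapP [i _ ->].
by move: (uniq_leq_size Hu Hsub); rewrite size_map size_iota ltnn.
Qed.

Definition IntAlg (w : E) := exists d0 (sc : nat -> E),
  (forall i, Rr (sc i)) /\ w ^+ d0.+1 = \sum_(i < d0.+1) sc i * w ^+ i.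

Lemma alg_scale (P : {poly E}) y : P != 0 -> Rpoly P -> P.[y] = 0 ->
  exists c, [/\ Rr c, c != 0 & IntAlg (c * y)].
Proof.
move=> HP HR Hy.
have HsP : (0 < size P)%N by rewrite size_poly_gt0.
have Hc : lead_coef P != 0 by rewrite lead_coef_eq0.
case HsE : (size P) => [|[|d0]]; first by rewrite HsE in HsP.
  move: Hy; rewrite horner_coef HsE big_ord1 expr0 mulr1 => H0.
  by move: Hc; rewrite lead_coefE HsE /= H0 eqxx.
set c := lead_coef P.
have Hcd : c = P`_d0.+1 by rewrite /c lead_coefE HsE.
exists c; split => //; first by rewrite Hcd; apply: HR.
exists d0, (fun i => - (P`_i * c ^+ (d0 - i))); split.
  by move=> i; apply: RN; apply: RM; [apply: HR | apply: RX; rewrite Hcd; apply: HR].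
move: Hy; rewrite horner_coef HsE big_ord_recr /= -Hcd => /eqP; rewrite addr_eq0 => /eqP H0.
have -> : (c * y) ^+ d0.+1 = c ^+ d0 * (c * y ^+ d0.+1) by rewrite exprMn exprS; ring.
rewrite -[c * y ^+ d0.+1]opprK -H0 mulrN mulr_sumr -sumrN.
apply: eq_bigr => i _.
rewrite -{1}(subnK (ltnSE (ltn_ord i))) exprD exprMn; ring.
Qed.

Lemma IntAlg_pow w : IntAlg w -> exists d0, forall j, exists r : nat -> E,
  (forall i, Rr (r i)) /\ w ^+ j = \sum_(i < d0.+1) r i * w ^+ i.
Proof.
move=> [d0 [sc [Hsc Hw]]]; exists d0; elim => [|j [r [Hr Hj]]].
  exists (fun i => if i == 0%N then 1 else 0); split.
    by move=> i; case: (_ == _); [exact: R1 | exact: R0].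
  rewrite big_ord_recl /= expr0 mulr1 big1 ?addr0 // => i _.
  by rewrite /bump /= add1n /= mul0r.
exists (fun i => (if i is i'.+1 then r i' else 0) + r d0 * sc i); split.
  by move=> [|i]; apply: RD; rewrite ?R0 //; try apply: RM; try apply: Hr; try apply: Hsc; exact: R0.
rewrite exprS Hj mulr_sumr.
rewrite [RHS](eq_bigr (fun i : 'I_d0.+1 => (if (i : nat) is i'.+1 then r i' else 0) * w ^+ i + r d0 * (sc i * w ^+ i))); last first.
  by move=> i _; rewrite mulrDl mulrA.
rewrite big_split /= -[X in _ = _ + X]mulr_sumr -Hw.
rewrite [in LHS]big_ord_recr /= [X in _ = X + _]big_ord_recl /= mul0r add0r.
congr (_ + _); last by rewrite exprS mulrCA.
by apply: eq_bigr => i _; rewrite /bump /= add1n exprS mulrCA.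
Qed.

Definition Rfin := exists sq : seq E, forall x, Rr x -> x \in sq.

Lemma Rfin_R_pow x : Rfin -> Rr x -> exists a b, (a < b)%N /\ x ^+ a = x ^+ b.
Proof.
move=> [sq Hsq] Hx; apply: (pigeon (h := fun j => x ^+ j) (sq := sq)) => j.
by apply: Hsq; apply: RX.
Qed.

Lemma Rfin_Int_pow w : Rfin -> IntAlg w -> exists a b, (a < b)%N /\ w ^+ a = w ^+ b.
Proof.
move=> [sq Hsq] /IntAlg_pow [d0 Hj].
pose T := [seq \sum_(i < d0.+1) nth 0 sq (t0 i : nat) * w ^+ i | t0 : {ffun 'I_d0.+1 -> 'I_(size sq)} <- enum {ffun 'I_d0.+1 -> 'I_(size sq)}].
apply: (pigeon (h := fun j => w ^+ j) (sq := T)) => j.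
have [r [Hr Hrj]] := Hj j.
have Hidx : forall i : 'I_d0.+1, (index (r i) sq < size sq)%N by move=> i; rewrite index_mem; apply: Hsq.
apply/mapP; exists [ffun i => Ordinal (Hidx i)]; first by rewrite mem_enum.
rewrite Hrj; apply: eq_bigr => i _; rewrite ffunE /= nth_index //; exact: Hsq.
Qed.

End RSec.

Section Emb.
Variables (F E E' : fieldType) (io : {rmorphism F -> E}) (io' : {rmorphism F -> E'}).
Variables (S : E -> Prop) (g : E -> E').
Hypothesis HS : subextension io S.
Hypothesis gD : forall x y, S x -> S y -> g (x + y) = g x + g y.
Hypothesis gM : forall x y, S x -> S y -> g (x * y) = g x * g y.
Hypothesis g1 : g 1 = 1.
Hypothesis gio : forall a, g (io a) = io' a.

Lemma S_io a : S (io a). Proof. by case: HS. Qed.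
Lemma S_0 : S 0. Proof. by rewrite -(rmorph0 io); apply: S_io. Qed.
Lemma S_1 : S 1. Proof. by rewrite -(rmorph1 io); apply: S_io. Qed.
Lemma S_add x y : S x -> S y -> S (x + y). Proof. by case: HS => _ H _ _ _; apply: H. Qed.
Lemma S_opp x : S x -> S (- x). Proof. by case: HS => _ _ H _ _; apply: H. Qed.
Lemma S_mul x y : S x -> S y -> S (x * y). Proof. by case: HS => _ _ _ H _; apply: H. Qed.
Lemma S_inv x : S x -> x != 0 -> S (x^-1). Proof. by case: HS => _ _ _ _ H; apply: H. Qed.

Lemma g0 : g 0 = 0.
Proof. by rewrite -(rmorph0 io) gio rmorph0. Qed.

Lemma gN x : S x -> g (- x) = - g x.
Proof.
move=> Hx; apply/eqP; rewrite -addr_eq0 addrC -gD ?subrr ?g0 //; exact: S_opp.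
Qed.

Lemma g_inj x y : S x -> S y -> g x = g y -> x = y.
Proof.
move=> Hx Hy Hg; apply/eqP; rewrite -subr_eq0; apply/negPn/negP => Hne.
have Hd : S (x - y) by apply: S_add => //; apply: S_opp.
have Hi := S_inv Hd Hne.
have := gM Hd Hi; rewrite divff // g1 gD ?gN ?Hg ?subrr ?mul0r; last exact: S_opp.
  by move/eqP; rewrite oner_eq0.
all: by [].
Qed.

Lemma eval_S (e : nat -> E) t : (forall i, S (e i)) -> S (eval_term io e t).
Proof.
move=> He; elim: t => [i|a|t1 IH1 t2 IH2|t1 IH1|t1 IH1 t2 IH2] /=.
- exact: He.
- exact: S_io.
- exact: S_add.
- exact: S_opp.
- exact: S_mul.
Qed.

Lemma eval_g (e : nat -> E) t : (forall i, S (e i)) ->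
  g (eval_term io e t) = eval_term io' (fun i => g (e i)) t.
Proof.
move=> He; elim: t => [i|a|t1 IH1 t2 IH2|t1 IH1|t1 IH1 t2 IH2] /=.
- by [].
- exact: gio.
- by rewrite gD ?IH1 ?IH2 //; apply: eval_S.
- by rewrite gN ?IH1 //; apply: eval_S.
- by rewrite gM ?IH1 ?IH2 //; apply: eval_S.
Qed.

Lemma holds_g (e : nat -> E) f : (forall i, S (e i)) ->
  holds_qf io e f <-> holds_qf io' (fun i => g (e i)) f.
Proof.
move=> He; elim: f => [t1 t2|||h IH|h IHh k IHk|h IHh k IHk] /=.
- rewrite -!eval_g //; split => [->//|]; apply: g_inj; exact: eval_S.
- by [].
- by [].
- by rewrite IH.
- by rewrite IHh IHk.
- by rewrite IHh IHk.
Qed.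

Fixpoint exs (f : pform F) : seq (qf_formula F) :=
  match f with
  | PQf _ => [::]
  | PEx h => [:: h]
  | PAnd a b => exs a ++ exs b
  | POr a b => exs a ++ exs b
  end.

Lemma transfer (e : nat -> E) f : (forall i, S (e i)) ->
  (forall h, List.In h (exs f) -> (exists b, holds_qf io (cons_env b e) h) ->
     exists b, S b /\ holds_qf io (cons_env b e) h) ->
  holds_pform io e f -> holds_pform io' (fun i => g (e i)) f.
Proof.
move=> He; elim: f => [h|h|a IHa b IHb|a IHa b IHb] /= Hex.
- by rewrite -holds_g.
- move=> Hb; have [b [Sb Hh]] := Hex h (or_introl erefl) Hb.
  exists (g b).
  have -> : cons_env (g b) (fun i => g (e i)) = (fun i => g (cons_env b e i)).
    by apply: functional_extensionality => -[|i].
  have HS' : forall i, S (cons_env b e i) by case.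
  by apply/(holds_g _ HS').
- case=> Ha Hb; split; [apply: IHa | apply: IHb] => // h Hh; apply: Hex;
    apply: List.in_or_app; by [left|right].
- case=> [Ha|Hb]; [left; apply: IHa | right; apply: IHb] => // h Hh; apply: Hex;
    apply: List.in_or_app; by [left|right].
Qed.

End Emb.

Lemma finite_bound (P : nat -> Prop) (Q : nat -> nat -> Prop) :
  (forall k M, Q k M -> Q k M.+1) -> forall L,
  (forall k, (k < L)%N -> P k -> exists M, Q k M) ->
  exists M, forall k, (k < L)%N -> P k -> Q k M.
Proof.
move=> Hmono.
have Hm : forall k M M', (M <= M')%N -> Q k M -> Q k M'.
  move=> k M M' /subnK <-; elim: (M' - M)%N => [|d IH] // HQ.
  by rewrite addSn; apply: Hmono; apply: IH.
elim => [|L IH] H; first by exists 0%N.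
have [M1 HM1] := IH (fun k Hk => H k (ltnW Hk)).
case: (classic (P L)) => HPL.
  have [M2 HM2] := H L (ltnSn _) HPL.
  exists (maxn M1 M2) => k; rewrite ltnS leq_eqVlt => /orP [/eqP ->|Hk] HP.
    by apply: Hm HM2; apply: leq_maxr.
  by apply: Hm (HM1 k Hk HP); apply: leq_maxl.
exists M1 => k; rewrite ltnS leq_eqVlt => /orP [/eqP ->|Hk] HP //.
exact: HM1.
Qed.

Section Gen.
Variables (F E : fieldType) (io : {rmorphism F -> E}) (gen : nat -> E).

Definition okI (nf k M : nat) : pred (seq nat) := fun v =>
  all (fun i => (i < nf)%N || (i == k)) v &&
  all (fun i => count_mem i v <= M)%N (iota 0 nf) && (count_mem k v <= M)%N.

Lemma mono_nil : mono gen [::] = 1. Proof. by rewrite /mono big_nil. Qed.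
Lemma mono_nseq a k : mono gen (nseq a k) = gen k ^+ a.
Proof. elim: a => [|a IH]; by rewrite ?mono_nil ?expr0 //= mono_cons IH exprS. Qed.

Lemma IntC_mono nf k M : (nf <= k)%N ->
  Comb io gen (okI nf k M) (gen k ^+ M.+1) -> Comb io gen (okI nf k M.+1) (gen k ^+ M.+2).
Proof.
move=> Hk HC; rewrite exprS.
have Hg : Comb io gen (pred1 [:: k]) (gen k).
  have := Comb_word io gen 1 (ok := pred1 [:: k]) (u := [:: k]) (eqxx _).
  by rewrite rmorph1 mul1r mono_cons mono_nil mulr1.
apply: (Comb_mul _ Hg HC) => u v /eqP -> /andP [/andP [H1 /allP H2] H3] /=.
rewrite /okI /= eqxx orbT H1 /= add1n ltnS H3 andbT; apply/allP => i Hi.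
have := H2 i Hi; rewrite mem_iota in Hi; case/andP: Hi => _ Hi.
have -> : (k == i) = false by apply/eqP => Eki; rewrite Eki in Hk; lia.
by rewrite add0n => /leq_trans; apply.
Qed.

Lemma Hint_of nf r :
  (forall k, (nf <= k < nf + r)%N -> exists M, Comb io gen (okI nf k M) (gen k ^+ M.+1)) ->
  exists M, forall k, (nf <= k < nf + r)%N ->
  exists l : seq (seq nat * F), gen k ^+ M.+1 = \sum_(p <- l) io p.2 * mono gen p.1 /\
    all (fun p => all (fun i => (i < nf)%N || (i == k)) p.1 &&
                  all (fun i => count_mem i p.1 <= M)%N (iota 0 nf) &&
                  (count_mem k p.1 <= M)%N) l.
Proof.
move=> H.
have [M HM] := @finite_bound (fun k => (nf <= k)%N)
  (fun k M => (nf <= k)%N -> Comb io gen (okI nf k M) (gen k ^+ M.+1))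
  (fun k M HQ Hk => IntC_mono Hk (HQ Hk)) (nf + r)
  (fun k Hk Hnf => ltac:(have [M HM] := H k (ltac:(by rewrite Hnf Hk)); by exists M)).
exists M => k /andP [Hk1 Hk2].
have [l [Hl Heq]] := HM k Hk2 Hk1 Hk1.
by exists l; split.
Qed.

Definition okF (nf B : nat) : pred (seq nat) := fun v =>
  all (fun i => i < nf)%N v && all (fun i => count_mem i v <= B)%N (iota 0 nf).

Lemma okF_mono nf B B' v : (B <= B')%N -> okF nf B v -> okF nf B' v.
Proof.
move=> HB /andP [H1 /allP H2]; rewrite /okF H1 /=; apply/allP => i Hi.
by apply: leq_trans (H2 i Hi) HB.
Qed.

Lemma R_combF (s : seq E) z : (forall i, (i < size s)%N -> gen i = nth 0 s i) ->
  Rr io s z -> exists B, Comb io gen (okF (size s) B) z.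
Proof.
move=> Hgen [t ->]; elim: t => [i|a|t1 [B1 H1] t2 [B2 H2]|t1 [B1 H1]|t1 [B1 H1] t2 [B2 H2]] /=.
- case: (ltnP i (size s)) => Hi.
    exists 1%N; rewrite -Hgen // -[gen i]mul1r -(rmorph1 io) -[gen i]mulr1 -mono_nil -mono_cons.
    apply: Comb_word; rewrite /okF /= Hi /=; apply/allP => j _ /=; by case: (i == j).
  by exists 0%N; rewrite nth_default //; apply: Comb0.
- exists 0%N; rewrite -[io a]mulr1 -mono_nil; apply: Comb_word.
  by rewrite /okF /=; apply/allP => j.
- exists (B1 + B2)%N; apply: CombD.
    by apply: Comb_sub H1 => v; apply: okF_mono; apply: leq_addr.
  by apply: Comb_sub H2 => v; apply: okF_mono; apply: leq_addl.
- by exists B1; apply: CombN.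
- exists (B1 + B2)%N; apply: (Comb_mul _ H1 H2) => u v /andP [Hu1 /allP Hu2] /andP [Hv1 /allP Hv2].
  rewrite /okF all_cat Hu1 Hv1 /=; apply/allP => i Hi.
  by rewrite count_cat leq_add // ?Hu2 ?Hv2.
Qed.

Lemma Int_of_pow nf k a b : (nf <= k)%N -> (a < b)%N -> gen k ^+ a = gen k ^+ b ->
  exists M, Comb io gen (okI nf k M) (gen k ^+ M.+1).
Proof.
move=> Hk Hab Heq; exists b.-1; rewrite prednK ?(leq_ltn_trans _ Hab) // -Heq.
rewrite -mono_nseq -[mono _ _]mul1r -(rmorph1 io); apply: Comb_word.
rewrite /okI count_nseq /= eqxx mul1n -ltnS prednK ?(leq_ltn_trans _ Hab) // andbT.
apply/andP; split; first by apply/allP => i /nseqP [-> _]; rewrite eqxx orbT.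
apply/allP => i; rewrite mem_iota count_nseq => /andP [_ Hi] /=.
have -> : (k == i) = false by apply/eqP => Eki; rewrite Eki in Hk; lia.
by rewrite mul0n.
Qed.

End Gen.


Section Main.
Variables (F E : fieldType) (io : {rmorphism F -> E}).

Lemma Int_of_alg (s : seq E) (gen : nat -> E) k :
  (forall i, (i < size s)%N -> gen i = nth 0 s i) -> (size s <= k)%N ->
  IntAlg io s (gen k) -> exists M, Comb io gen (okI (size s) k M) (gen k ^+ M.+1).
Proof.
move=> Hgen Hk [d0 [sc [Hsc Hw]]].
have [B HB] := @finite_bound (fun _ => True) (fun i B => Comb io gen (okF (size s) B) (sc i))
  (fun i B H => Comb_sub (fun v => okF_mono (leqnSn B)) H) d0.+1
  (fun i _ _ => R_combF Hgen (Hsc i)).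
set M := maxn B d0; exists M.
have -> : gen k ^+ M.+1 = gen k ^+ (M - d0) * gen k ^+ d0.+1.
  by rewrite -exprD; congr (_ ^+ _); rewrite /M; lia.
rewrite Hw mulr_sumr; apply: big_ind => //; first exact: Comb0.
  by move=> x y; apply: CombD.
move=> i _.
have -> : gen k ^+ (M - d0) * (sc i * gen k ^+ i) = sc i * mono gen (nseq (i + (M - d0)) k).
  by rewrite mono_nseq exprD; ring.
have Hword : Comb io gen (pred1 (nseq (i + (M - d0)) k)) (mono gen (nseq (i + (M - d0)) k)).
  by have := Comb_word io gen 1 (ok := pred1 (nseq (i + (M - d0)) k)) (eqxx _); rewrite rmorph1 mul1r.
apply: (Comb_mul _ (HB i (ltn_ord i) I) Hword) => u v /andP [/allP Hu1 /allP Hu2] /eqP ->.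
have Hcu : count_mem k u = 0%N.
  apply/count_memPn/negP => /Hu1; lia.
rewrite /okI all_cat count_cat Hcu count_nseq /= eqxx mul1n add0n.
have Hi := ltn_ord i.
have -> : (i + (M - d0) <= M)%N by rewrite /M; lia.
rewrite andbT; apply/andP; split; first (apply/andP; split).
- by apply/allP => j /Hu1 ->.
- by apply/allP => j /nseqP [-> _]; rewrite eqxx orbT.
- apply/allP => j Hj; rewrite count_cat count_nseq.
  have -> : (pred1 j k) = false.
    by move: Hj; rewrite mem_iota => /andP [_ Hj] /=; apply/eqP => Ekj; lia.
  rewrite mul0n addn0; apply: leq_trans (Hu2 j Hj) _; exact: leq_maxl.
Qed.

Lemma R_A (s : seq E) (gen : nat -> E) (nf r dd : nat) z :
  (forall x y, Aset io gen nf r dd x -> Aset io gen nf r dd y -> Aset io gen nf r dd (x * y)) ->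
  (forall i, Aset io gen nf r dd (nth 0 s i)) -> Rr io s z -> Aset io gen nf r dd z.
Proof.
move=> HM Hs [t ->]; elim: t => [i|a|t1 H1 t2 H2|t1 H1|t1 H1 t2 H2] /=.
- exact: Hs.
- exact: A_io.
- exact: A_add.
- exact: A_opp.
- exact: HM.
Qed.

Lemma witnesses (s : seq E) (hs : seq (qf_formula F)) :
  exists bs : seq E, forall h, List.In h hs ->
    (exists b, holds_qf io (cons_env b (fun i => nth 0 s i)) h) ->
    exists b, b \in bs /\ holds_qf io (cons_env b (fun i => nth 0 s i)) h.
Proof.
elim: hs => [|h hs [bs Hbs]]; first by exists [::].
case: (classic (exists b, holds_qf io (cons_env b (fun i => nth 0 s i)) h)) => [[b Hb]|Hn].
  exists (b :: bs) => h' [<-|Hin] Hsat.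
    by exists b; rewrite inE eqxx.
  have [b' [Hb' Hh']] := Hbs h' Hin Hsat; exists b'; by rewrite inE Hb' orbT.
exists bs => h' [<-|Hin] Hsat; first by exfalso; apply: Hn.
exact: Hbs.
Qed.

Lemma alg_list (s : seq E) (bs : seq E) :
  exists ws : seq E, (forall w, w \in ws -> IntAlg io s w) /\
    forall b, b \in bs -> trans io s b \/
      exists c w, [/\ Rr io s c, c != 0, w \in ws & b = w / c].
Proof.
elim: bs => [|b bs [ws [Hws Hcl]]]; first by exists [::].
case: (classic (trans io s b)) => Htr.
  exists ws; split => // b'; rewrite inE => /orP [/eqP ->|/Hcl //]; by left.
have [P HP] : exists P, ~ (Rpoly io s P -> P.[b] = 0 -> P = 0) by apply: not_all_ex_not.
have HR : Rpoly io s P by apply: NNPP => H; apply: HP => /H.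
have Hb : P.[b] = 0 by apply: NNPP => H; apply: HP => _ /H.
have HP0 : P != 0 by apply/eqP => H; apply: HP => _ _.
have [c [Hc Hc0 Hint]] := alg_scale HP0 HR Hb.
exists (c * b :: ws); split.
  by move=> w; rewrite inE => /orP [/eqP ->|/Hws].
move=> b'; rewrite inE => /orP [/eqP ->|/Hcl [H|[c' [w [H1 H2 H3 H4]]]]].
- right; exists c, (c * b); split => //; first by rewrite inE eqxx.
  by rewrite mulrC mulKf.
- by left.
- by right; exists c', w; split => //; rewrite inE H3 orbT.
Qed.


Lemma main_exists (s : seq E) (n : nat) (hs : seq (qf_formula F)) :
  (1 <= n)%N -> (size s <= n)%N ->
  exists S : E -> Prop, [/\ subextension io S, trdeg_le io S n,
    forall i, S (nth 0 s i) &
    forall h, List.In h hs ->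
      (exists b, holds_qf io (cons_env b (fun i => nth 0 s i)) h) ->
      exists b, S b /\ holds_qf io (cons_env b (fun i => nth 0 s i)) h].
Proof.
move=> Hn Hsn.
have [bs Hbs] := witnesses s hs.
have [ws [Hws Hcl]] := alg_list s bs.
case: (classic (Rinf io s)) => HR.
- pose gen := nth 0 (s ++ ws).
  have Hgs : forall i, (i < size s)%N -> gen i = nth 0 s i by move=> i Hi; rewrite /gen nth_cat Hi.
  have Hgw : forall j, (j < size ws)%N -> gen (size s + j)%N = nth 0 ws j.
    by move=> j Hj; rewrite /gen nth_cat ltnNge leq_addr /= addKn.
  have Hpre : forall k, (size s <= k < size s + size ws)%N ->
      exists M, Comb io gen (okI (size s) k M) (gen k ^+ M.+1).
    move=> k /andP [Hk1 Hk2]; apply: (Int_of_alg Hgs Hk1).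
    rewrite -(subnKC Hk1) Hgw; last by lia.
    apply: Hws; apply: mem_nth; by rewrite ltn_subLR.
  have [M HintM] := Hint_of Hpre.
  have HAM : forall x y, Aset io gen (size s) (size ws) M x -> Aset io gen (size s) (size ws) M y ->
      Aset io gen (size s) (size ws) M (x * y) by move=> x y; exact: (A_mul HintM).
  have HAs : forall i, Aset io gen (size s) (size ws) M (nth 0 s i).
    move=> i; case: (ltnP i (size s)) => Hi.
      by rewrite -Hgs //; apply: (A_gen HintM); lia.
    by rewrite nth_default // -(rmorph0 io); apply: A_io.
  exists (Sset io gen (size s) (size ws) M); split.
  + exact: S_subext HintM.
  + exact: trdeg_fw HintM _ Hsn.
  + by move=> i; apply: A_S.
  + move=> h Hin Hsat; have [b [Hb Hh]] := Hbs h Hin Hsat.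
    case: (Hcl b Hb) => [Htr|[c [w [Hc Hc0 Hw Ebw]]]].
      have [u [Hu Hhu]] := trans_replace HR Htr Hh.
      by exists u; split => //; apply: A_S; apply: R_A HAM HAs Hu.
    exists b; split => //; exists w, c; split; [|split; [|split]] => //.
      have Hidx : (index w ws < size ws)%N by rewrite index_mem.
      rewrite -(nth_index 0 Hw) -Hgw //; apply: (A_gen HintM); by rewrite ltn_add2l.
    exact: R_A HAM HAs Hc.
- have [sq Hsq] : exists sq : seq E, forall x, Rr io s x -> x \in sq.
    apply: NNPP => Hn2; apply: HR => sq; apply: NNPP => Hn3; apply: Hn2; exists sq => x Hx.
    by apply: NNPP => Hx2; apply: Hn3; exists x; split => //; apply/negP.
  have HRf : Rfin io s by exists sq.
  have [t Ht] : exists t, forall b, b \in bs -> trans io s b -> trans io s t.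
    case: (classic (exists b0, b0 \in bs /\ trans io s b0)) => [[b0 [_ Hb0]]|Hno].
      by exists b0.
    by exists 0 => b Hb Htr; exfalso; apply: Hno; exists b.
  pose gen := nth 0 (t :: s ++ ws).
  have Hgs : forall i, (i < size s)%N -> gen i.+1 = nth 0 s i by move=> i Hi; rewrite /gen /= nth_cat Hi.
  have Hgw : forall j, (j < size ws)%N -> gen (size s + j).+1 = nth 0 ws j.
    by move=> j Hj; rewrite /gen /= nth_cat ltnNge leq_addr /= addKn.
  have Hpre : forall k, (1 <= k < 1 + (size s + size ws))%N ->
      exists M, Comb io gen (okI 1 k M) (gen k ^+ M.+1).
    move=> [|k] // /andP [_ Hk2]; rewrite add1n ltnS in Hk2.
    case: (ltnP k (size s)) => Hks.
      have [a [b [Hab Heq]]] := Rfin_R_pow HRf (R_e io s k).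
      by apply: Int_of_pow (Hab) _ => //; rewrite Hgs.
    have Hw : IntAlg io s (gen k.+1).
      rewrite -(subnKC Hks) Hgw; last by lia.
      by apply: Hws; apply: mem_nth; rewrite ltn_subLR.
    have [a [b [Hab Heq]]] := Rfin_Int_pow HRf Hw.
    exact: Int_of_pow (Hab) Heq.
  have [M HintM] := Hint_of Hpre.
  have HAM : forall x y, Aset io gen 1 (size s + size ws) M x -> Aset io gen 1 (size s + size ws) M y ->
      Aset io gen 1 (size s + size ws) M (x * y) by move=> x y; exact: (A_mul HintM).
  have HAs : forall i, Aset io gen 1 (size s + size ws) M (nth 0 s i).
    move=> i; case: (ltnP i (size s)) => Hi.
      by rewrite -Hgs //; apply: (A_gen HintM); lia.
    by rewrite nth_default // -(rmorph0 io); apply: A_io.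
  exists (Sset io gen 1 (size s + size ws) M); split.
  + exact: S_subext HintM.
  + exact: trdeg_fw HintM _ Hn.
  + by move=> i; apply: A_S.
  + move=> h Hin Hsat; have [b [Hb Hh]] := Hbs h Hin Hsat.
    case: (Hcl b Hb) => [Htr|[c [w [Hc Hc0 Hw Ebw]]]].
      exists t; split; first by apply: A_S; rewrite (_ : t = gen 0) //; apply: (A_gen HintM).
      by apply: trans_swap Htr (Ht b Hb Htr) Hh.
    exists b; split => //; exists w, c; split; [|split; [|split]] => //.
      have Hidx : (index w ws < size ws)%N by rewrite index_mem.
      rewrite -(nth_index 0 Hw) -Hgw //; apply: (A_gen HintM).
      by rewrite add1n ltnS ltn_add2l.
    exact: R_A HAM HAs Hc.
Qed.

End Main.

Unset Implicit Arguments.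
Theorem lemma5p1 (F : fieldType) (n : nat) (phi : ex_formula F) :
  (1 <= n)%N -> is_EnE1_sentence n phi -> efd_Sigma_le phi n.
Proof.
move=> Hn /andP [Hv _]; exists n; split => // E io [s [Hs Hh]].
have [S [HS Htr HSe HSex]] := @main_exists F E io s n (exs (ex_matrix phi)) Hn (ltac:(by rewrite Hs)).
exists S; split => // E' io' [g [gD gM g1 gio]].
exists (map g s); split; first by rewrite size_map.
have -> : (fun i => nth 0 (map g s) i) = (fun i => g (nth 0 s i)).
  apply: functional_extensionality => i; case: (ltnP i (size s)) => Hi.
    by rewrite (nth_map 0).
  by rewrite !nth_default ?size_map // (g0 gio).
exact: (transfer HS gD gM g1 gio HSe HSex Hh).
Qed.
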